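(* Let $d\ge 7$ be odd and let ${\rm F}_d\subset\mathbb{P}^3(\mathbb{C})$ be the Fermat surface $x^d-y^d-z^d+w^d=0$. Then the maximal number of pairwise disjoint lines contained in ${\rm F}_d$ equals $3d$. *)

(* Defs.v *)
From HB Require Import structures.
From mathcomp Require Import all_boot all_order all_algebra.
From mathcomp Require Import reals complex.
Set Implicit Arguments. Unset Strict Implicit. Unset Printing Implicit Defensive.
Import Order.TTheory GRing.Theory Num.Theory.
Local Open Scope ring_scope.

(* Homogeneous coordinates (x,y,z,w) of a point of P^3 are a nonzero row
   vector u : 'rV_4, with x = u 0 0, y = u 0 1, z = u 0 2, w = u 0 3. *)
Definition fermat_form (K : fieldType) (d : nat) (u : 'rV[K]_4) : K :=
  u 0 0 ^+ d - u 0 1 ^+ d - u 0 2 ^+ d + u 0 3 ^+ d.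

(* A line of P^3(K) is a 2-dimensional subspace of K^4, given as the row
   space of a 2x4 matrix of rank 2. *)
Definition is_line (K : fieldType) (L : 'M[K]_(2, 4)) : bool := \rank L == 2%N.

Definition line_in_fermat (K : fieldType) (d : nat) (L : 'M[K]_(2, 4)) : Prop :=
  is_line L /\ forall u : 'rV[K]_4, (u <= L)%MS -> fermat_form d u = 0.

Definition disjoint_lines (K : fieldType) (L1 L2 : 'M[K]_(2, 4)) : bool :=
  \rank (L1 :&: L2)%MS == 0%N.

Definition disjoint_fermat_lines (K : fieldType) (d n : nat)
    (Ls : 'I_n -> 'M[K]_(2, 4)) : Prop :=
  (forall i, line_in_fermat d (Ls i)) /\
  (forall i j, i != j -> disjoint_lines (Ls i) (Ls j)).

(* Main.v *)
Require Import Defs.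
From HB Require Import structures.
From mathcomp Require Import all_boot all_order all_algebra.
From mathcomp Require Import reals complex.
From mathcomp Require Import separable cyclic cyclotomic.
From mathcomp Require Import zify ring.
Set Implicit Arguments. Unset Strict Implicit. Unset Printing Implicit Defensive.
Import Order.TTheory GRing.Theory Num.Theory.
Local Open Scope ring_scope.

(* Proof outline:
   - upper bound: every line on F_d contains a point r*e_0 + e_j (j = 1,2,3)
     with r^d = -eps_j; disjoint lines give distinct such points, and for each j
     there are at most d such r (roots of X^d + eps_j), hence n <= 3d.
   - lower bound: explicit families of 3d lines x = z y, w = e z (etc.) built from
     a primitive d-th root of unity, with exponent conditions checked
     combinatorially (two infinite families for d = 3, 1 mod 4 and a finite
     computation for d in {7, 9, 13, 17, 21}). *)

Lemma ord4P (j : 'I_4) : [\/ j = 0, j = 1, j = 2 | j = 3].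
Proof.
case: j => [[|[|[|[|j]]]] Hj] //.
- by constructor 1; apply: val_inj.
- by constructor 2; apply: val_inj.
- by constructor 3; apply: val_inj.
- by constructor 4; apply: val_inj.
Qed.

Lemma ord2P (j : 'I_2) : j = 0 \/ j = 1.
Proof.
case: j => [[|[|j]] Hj] //; [left|right]; exact: val_inj.
Qed.

Lemma fermat_formE (K : fieldType) d (u : 'rV[K]_4) :
  fermat_form d u = u 0 0 ^+ d - u 0 1 ^+ d - u 0 2 ^+ d + u 0 3 ^+ d.
Proof. by []. Qed.

Lemma sub2P (K : fieldType) (L : 'M[K]_(2,4)) (u : 'rV[K]_4) :
  (u <= L)%MS -> exists s t, forall j, u 0 j = s * L 0 j + t * L 1 j.
Proof.
move/submxP => [D ->]; exists (D 0 0); exists (D 0 1); move=> j.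
rewrite mxE !big_ord_recl big_ord0 addr0.
by congr (_ * _ + _ * _); congr (_ _ _); apply: val_inj.
Qed.

Definition comb (K : fieldType) (L : 'M[K]_(2,4)) (s t : K) : 'rV[K]_4 :=
  \row_j (s * L 0 j + t * L 1 j).

Lemma comb_sub (K : fieldType) (L : 'M[K]_(2,4)) s t : (comb L s t <= L)%MS.
Proof.
have -> : comb L s t = (\row_(k < 2) (if k == 0 then s else t)) *m L.
  apply/rowP => j; rewrite !mxE !big_ord_recl big_ord0 addr0 !mxE /=.
  by congr (_ * _ + _ * _); congr (_ _ _); apply: val_inj.
exact: submxMl.
Qed.

Definition minor (K : fieldType) (L : 'M[K]_(2,4)) (a b : 'I_4) :=
  L 0 a * L 1 b - L 0 b * L 1 a.

Lemma rank_le1 (K : fieldType) (L : 'M[K]_(2,4)) :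
  (forall a b, minor L a b = 0) -> (\rank L <= 1)%N.
Proof.
move=> Hm.
have [c [r ->]] : exists (c : 'M[K]_(2,1)) (r : 'M[K]_(1,4)), L = c *m r.
  case: (pickP (fun a => L 0 a != 0)) => [a Ha | H0].
  - exists (\col_i (L i a / L 0 a)); exists (row 0 L).
    apply/matrixP => i j; rewrite !mxE big_ord1 !mxE.
    case: (ord2P i) => ->.
    + by rewrite divff // mul1r.
    + have := Hm a j; rewrite /minor => /eqP; rewrite subr_eq0 => /eqP E.
      by rewrite mulrAC (mulrC (L 1 a)) -E (mulrC (L 0 a)) mulfK.
  - exists (\col_i (if val i == 0%N then 0 else 1)); exists (row 1 L).
    apply/matrixP => i j; rewrite !mxE big_ord1 !mxE.
    case: (ord2P i) => -> /=.
    + by rewrite mul0r; move/negbFE/eqP: (H0 j).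
    + by rewrite mul1r.
exact: leq_trans (mxrankM_maxl _ _) (rank_leq_col _).
Qed.

Lemma line_minor (K : fieldType) (L : 'M[K]_(2,4)) :
  is_line L -> exists a b : 'I_4, (a < b)%N /\ minor L a b != 0.
Proof.
move=> /eqP HL.
case: (boolP [exists a, exists b, minor L a b != 0]) => [/existsP[a /existsP[b H]]|H].
  case: (ltngtP a b) => [lt_ab|lt_ba|eq_ab].
  - by exists a; exists b.
  - exists b; exists a; split=> //; move: H; rewrite /minor.
    by apply: contra => /eqP E; apply/eqP; rewrite -[LHS]opprK opprB E oppr0.
  - by move: H; rewrite /minor (val_inj eq_ab) subrr eqxx.
exfalso; have: (\rank L <= 1)%N; last by rewrite HL.
apply: rank_le1 => a b; apply/eqP; apply: contraNT H => Hab.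
by apply/existsP; exists a; apply/existsP; exists b.
Qed.

Definition alc (K : fieldType) (L : 'M[K]_(2,4)) a b j :=
  (L 1 b * L 0 j - L 0 b * L 1 j) / minor L a b.
Definition bec (K : fieldType) (L : 'M[K]_(2,4)) a b j :=
  (L 0 a * L 1 j - L 1 a * L 0 j) / minor L a b.
Definition wv (K : fieldType) (L : 'M[K]_(2,4)) a b (s t : K) : 'rV[K]_4 :=
  \row_j (alc L a b j * s + bec L a b j * t).

Lemma wv_sub (K : fieldType) (L : 'M[K]_(2,4)) a b s t :
  minor L a b != 0 -> (wv L a b s t <= L)%MS.
Proof.
move=> Hm.
have -> : wv L a b s t = comb L ((s * L 1 b - t * L 1 a) / minor L a b)
                                  ((t * L 0 a - s * L 0 b) / minor L a b).
  apply/rowP => j; rewrite !mxE /alc /bec.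
  by field.
exact: comb_sub.
Qed.

Lemma alc_a (K : fieldType) (L : 'M[K]_(2,4)) a b :
  minor L a b != 0 -> alc L a b a = 1.
Proof. by move=> Hm; rewrite /alc (mulrC (L 1 b)) divff. Qed.
Lemma alc_b (K : fieldType) (L : 'M[K]_(2,4)) a b : alc L a b b = 0.
Proof. by rewrite /alc [L 1 b * _]mulrC subrr mul0r. Qed.
Lemma bec_a (K : fieldType) (L : 'M[K]_(2,4)) a b : bec L a b a = 0.
Proof. by rewrite /bec [L 0 a * _]mulrC subrr mul0r. Qed.
Lemma bec_b (K : fieldType) (L : 'M[K]_(2,4)) a b :
  minor L a b != 0 -> bec L a b b = 1.
Proof. by move=> Hm; rewrite /bec (mulrC (L 1 a)) divff. Qed.


Lemma poly_vanish (K : numFieldType) (n : nat) (c : nat -> K) :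
  (forall x : K, \sum_(i < n) c i * x ^+ i = 0) -> forall i, (i < n)%N -> c i = 0.
Proof.
move=> H i lt_in.
pose p := \poly_(i < n) c i.
have p0 : p = 0.
  apply/eqP; apply/negPn/negP => nz.
  have rs_all : all (root p) [seq k%:R | k <- iota 0 (size p)].
    by apply/allP => x /mapP [k _ ->]; rewrite /root horner_poly H.
  have rs_uniq : uniq [seq (k%:R : K) | k <- iota 0 (size p)].
    rewrite map_inj_uniq ?iota_uniq // => k1 k2 /eqP.
    by rewrite eqr_nat => /eqP.
  by move: (max_poly_roots nz rs_all rs_uniq); rewrite size_map size_iota ltnn.
by have := congr1 (fun q : {poly K} => q`_i) p0; rewrite coef_poly lt_in coef0.
Qed.

Definition cf (K : fieldType) (d : nat) (ea eb ec ee al be ga de : K) (i : nat) : K :=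
  (ec * al ^+ i * be ^+ (d - i) + ee * ga ^+ i * de ^+ (d - i)) *+ 'C(d, i)
  + (if i == d then ea else 0) + (if i == 0%N then eb else 0).

Lemma expand4 (K : fieldType) (d : nat) (ea eb ec ee al be ga de x : K) :
  ea * x ^+ d + eb + ec * (al * x + be) ^+ d + ee * (ga * x + de) ^+ d =
  \sum_(i < d.+1) cf d ea eb ec ee al be ga de i * x ^+ i.
Proof.
rewrite /cf.
under eq_bigr do rewrite !mulrDl.
rewrite !big_split /=.
have E1 : \sum_(i < d.+1) (if (i : nat) == d then ea else 0) * x ^+ i = ea * x ^+ d.
  rewrite big_ord_recr /= eqxx big1 ?add0r // => i _.
  by rewrite (ltn_eqF (ltn_ord i)) mul0r.
have E2 : \sum_(i < d.+1) (if (i : nat) == 0%N then eb else 0) * x ^+ i = eb.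
  by rewrite big_ord_recl /= big1 ?addr0 ?expr0 ?mulr1 // => i _; rewrite mul0r.
rewrite E1 E2.
rewrite (addrC (al * x)) (addrC (ga * x)) !exprDn !mulr_sumr -[LHS]addrA -big_split /=.
rewrite -[RHS]addrA [RHS]addrC; congr (_ + _).
apply: eq_bigr => i _.
rewrite !exprMn; set C := 'C(d, i).
rewrite !mulrnAr !mulrnAl -mulrnDl; congr (_ *+ _); ring.
Qed.

Lemma mulrn_eq0' (K : numFieldType) (x : K) n : (0 < n)%N -> x *+ n = 0 -> x = 0.
Proof. by move=> n0 /eqP; rewrite mulrn_eq0 eqn0Ngt n0 /= => /eqP. Qed.

Lemma key_alg (K : numFieldType) (m : nat) (ea eb ec ee al be ga de : K) :
  ea != 0 -> eb != 0 -> ec != 0 -> ee != 0 ->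
  (forall x, ea * x ^+ m.+3 + eb + ec * (al * x + be) ^+ m.+3
             + ee * (ga * x + de) ^+ m.+3 = 0) ->
  (be = 0 /\ ga = 0 /\ ea + ec * al ^+ m.+3 = 0 /\ eb + ee * de ^+ m.+3 = 0) \/
  (al = 0 /\ de = 0 /\ ea + ee * ga ^+ m.+3 = 0 /\ eb + ec * be ^+ m.+3 = 0).
Proof.
move=> nza nzb nzc nze H.
have Hc : forall i, (i <= m.+3)%N -> cf m.+3 ea eb ec ee al be ga de i = 0.
  move=> i hi; apply: (poly_vanish (n := m.+4)) => // x; rewrite -expand4; exact: H.
have Ed : ec * al ^+ m.+3 + ee * ga ^+ m.+3 + ea = 0.
  have := Hc _ (leqnn _); rewrite /cf subnn !expr0 !mulr1 binn mulr1n eqxx /=.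
  by rewrite addr0.
have E0 : ec * be ^+ m.+3 + ee * de ^+ m.+3 + eb = 0.
  have := Hc 0%N isT; rewrite /cf subn0 !expr0 !mulr1 bin0 mulr1n /=.
  by rewrite addr0.
have E1 : ec * al * be ^+ m.+2 + ee * ga * de ^+ m.+2 = 0.
  have := Hc 1%N isT; rewrite /cf subn1 !expr1 bin1 /= !addr0.
  exact: mulrn_eq0'.
have Em2 : ec * al ^+ m.+2 * be + ee * ga ^+ m.+2 * de = 0.
  have := Hc m.+2 (leqnSn _); rewrite /cf.
  have -> : (m.+3 - m.+2 = 1)%N by lia.
  rewrite !expr1 binSn.
  have -> : (m.+2 == m.+3) = false by lia.
  rewrite /= !addr0; exact: mulrn_eq0'.
have Em1 : ec * al ^+ m.+1 * be ^+ 2 + ee * ga ^+ m.+1 * de ^+ 2 = 0.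
  have := Hc m.+1 (leqW (leqnSn _)); rewrite /cf.
  have -> : (m.+3 - m.+1 = 2)%N by lia.
  have -> : (m.+1 == m.+3) = false by lia.
  rewrite /= !addr0; apply: mulrn_eq0'; rewrite bin_gt0; lia.
have z0 : forall n, (0 : K) ^+ n.+1 = 0 by move=> n; rewrite exprS mul0r.
have fin1 : be = 0 /\ ga = 0 -> (be = 0 /\ ga = 0 /\ ea + ec * al ^+ m.+3 = 0 /\ eb + ee * de ^+ m.+3 = 0) \/
  (al = 0 /\ de = 0 /\ ea + ee * ga ^+ m.+3 = 0 /\ eb + ec * be ^+ m.+3 = 0).
  move=> [b0 g0]; left; do 2!split=> //; move: Ed E0; rewrite b0 g0 !z0 !mulr0 ?add0r ?addr0 => Ed' E0'.
  by split; rewrite addrC.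
have fin2 : al = 0 /\ de = 0 -> (be = 0 /\ ga = 0 /\ ea + ec * al ^+ m.+3 = 0 /\ eb + ee * de ^+ m.+3 = 0) \/
  (al = 0 /\ de = 0 /\ ea + ee * ga ^+ m.+3 = 0 /\ eb + ec * be ^+ m.+3 = 0).
  move=> [a0 d0]; right; do 2!split=> //; move: Ed E0; rewrite a0 d0 !z0 !mulr0 ?add0r ?addr0 => Ed' E0'.
  by split; rewrite addrC.
have split3 : forall (x y z : K) n, x != 0 -> x * y * z ^+ n.+1 = 0 -> y = 0 \/ z = 0.
  move=> x y z n nx /eqP; rewrite !mulf_eq0 (negbTE nx) expf_eq0 /=.
  by case/orP => /eqP; [left|right].
case: (eqVneq al 0) => [a0|nza'].
  have [g0|d0] : ga = 0 \/ de = 0.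
    by apply: (split3 ee ga de m.+1 nze); move: E1; rewrite a0 mulr0 mul0r add0r.
  - exfalso; move: Ed; rewrite a0 g0 !z0 !mulr0 !add0r => /eqP; by rewrite (negbTE nza).
  - by apply: fin2.
case: (eqVneq be 0) => [b0|nzb'].
  have [g0|d0] : ga = 0 \/ de = 0.
    by apply: (split3 ee ga de m.+1 nze); move: E1; rewrite b0 z0 mulr0 add0r.
  - by apply: fin1.
  - exfalso; move: E0; rewrite b0 d0 !z0 !mulr0 !add0r => /eqP; by rewrite (negbTE nzb).
case: (eqVneq ga 0) => [g0|nzg].
  have [a0|b0] : al = 0 \/ be = 0.
    by apply: (split3 ec al be m.+1 nzc); move: E1; rewrite g0 mulr0 mul0r addr0.
  - by rewrite a0 eqxx in nza'.
  - by rewrite b0 eqxx in nzb'.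
case: (eqVneq de 0) => [d0|nzd].
  have [a0|b0] : al = 0 \/ be = 0.
    by apply: (split3 ec al be m.+1 nzc); move: E1; rewrite d0 z0 mulr0 addr0.
  - by rewrite a0 eqxx in nza'.
  - by rewrite b0 eqxx in nzb'.
exfalso.
set X := ec * al ^+ m.+1; set Y := ee * ga ^+ m.+1.
have e1 : X * al * be + Y * ga * de = 0 by rewrite -Em2 /X /Y !exprS; ring.
have e2 : X * be * be + Y * de * de = 0 by rewrite -Em1 /X /Y; ring.
have ed : X * al * al + Y * ga * ga = - ea by rewrite -[RHS]add0r -Ed /X /Y !exprS; ring.
have nzY : Y != 0 by rewrite /Y mulf_neq0 // expf_neq0.
clearbody X Y.
have h1 : Y * de * (ga * be - al * de) = 0.
  transitivity (be * (X * al * be + Y * ga * de) - al * (X * be * be + Y * de * de)); first by ring.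
  by rewrite e1 e2; ring.
move/eqP: h1; rewrite !mulf_eq0 (negbTE nzY) (negbTE nzd) /= subr_eq0 => /eqP h1.
have h2 : be * (X * al * al + Y * ga * ga) = 0.
  transitivity (al * (X * al * be + Y * ga * de) + Y * ga * (ga * be - al * de)); first by ring.
  by rewrite e1 h1 subrr !mulr0 addr0.
move/eqP: h2; rewrite mulf_eq0 (negbTE nzb') ed oppr_eq0 (negbTE nza) //.
Qed.


Definition eps (K : pzRingType) (j : 'I_4) : K :=
  if (val j == 0%N) || (val j == 3%N) then 1 else -1.

Lemma eps_neq0 (K : numFieldType) j : eps K j != 0.
Proof. by rewrite /eps; case: ifP => _; rewrite ?oppr_eq0 oner_eq0. Qed.

Lemma class_core (K : numFieldType) (m : nat) (L : 'M[K]_(2,4)) (a b c e : 'I_4) :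
  minor L a b != 0 ->
  (forall u : 'rV[K]_4, (u <= L)%MS -> fermat_form m.+3 u = 0) ->
  (forall u : 'rV[K]_4, fermat_form m.+3 u = eps K a * u 0 a ^+ m.+3 + eps K b * u 0 b ^+ m.+3
        + eps K c * u 0 c ^+ m.+3 + eps K e * u 0 e ^+ m.+3) ->
  (bec L a b c = 0 /\ alc L a b e = 0 /\ eps K a + eps K c * alc L a b c ^+ m.+3 = 0
     /\ eps K b + eps K e * bec L a b e ^+ m.+3 = 0) \/
  (alc L a b c = 0 /\ bec L a b e = 0 /\ eps K a + eps K e * alc L a b e ^+ m.+3 = 0
     /\ eps K b + eps K c * bec L a b c ^+ m.+3 = 0).
Proof.
move=> Hm HF Hform.
apply: key_alg; rewrite ?eps_neq0 // => x.
have := HF _ (wv_sub x 1 Hm); rewrite Hform !mxE alc_a // alc_b bec_a bec_b // => <-.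
by rewrite !mul1r !mul0r !addr0 add0r !mulr1 expr1n mulr1.
Qed.

Lemma eps_sq (K : numFieldType) j : eps K j * eps K j = 1.
Proof. by rewrite /eps; case: ifP => _; rewrite ?mulrNN mulr1. Qed.

Lemma eps_inv (K : numFieldType) j : (eps K j)^-1 = eps K j.
Proof. by rewrite /eps; case: ifP => _; rewrite ?invrN invr1. Qed.

Definition evec (K : fieldType) (r : K) (j : 'I_4) : 'rV[K]_4 :=
  \row_k (if k == 0 then r else if k == j then 1 else 0).

Lemma fin0 (K : numFieldType) d (L : 'M[K]_(2,4)) (w : 'rV[K]_4) (j : 'I_4) (lam : K) :
  (0 < d)%N -> j != 0 -> (w <= L)%MS ->
  (forall k, w 0 k = if k == 0 then 1 else if k == j then lam else 0) ->
  1 + eps K j * lam ^+ d = 0 -> exists r, r ^+ d = - eps K j /\ (evec r j <= L)%MS.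
Proof.
move=> d0 nj wL Hw He.
have Hl : lam ^+ d = - eps K j.
  apply: (mulfI (eps_neq0 K j)); rewrite mulrN eps_sq.
  by apply/eqP; rewrite -addr_eq0 addrC He.
have nl : lam != 0.
  apply/negP => /eqP l0; move: Hl; rewrite l0 expr0n eqn0Ngt d0 /= mulr0n => /eqP.
  by rewrite eq_sym oppr_eq0 (negbTE (eps_neq0 K j)).
exists lam^-1; split; first by rewrite exprVn Hl invrN eps_inv.
have -> : evec lam^-1 j = lam^-1 *: w.
  apply/rowP => k; rewrite !mxE Hw.
  case: ifP => _; first by rewrite mulr1.
  by case: ifP => _; rewrite ?mulVf ?mulr0.
exact: scalemx_sub.
Qed.

Lemma finj (K : numFieldType) d (L : 'M[K]_(2,4)) (w : 'rV[K]_4) (j : 'I_4) (lam : K) :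
  (w <= L)%MS ->
  (forall k, w 0 k = if k == 0 then lam else if k == j then 1 else 0) ->
  eps K j + lam ^+ d = 0 -> exists r, r ^+ d = - eps K j /\ (evec r j <= L)%MS.
Proof.
move=> wL Hw He; exists lam; split.
  by apply/eqP; rewrite -addr_eq0 addrC He.
by have -> : evec lam j = w by apply/rowP => k; rewrite !mxE Hw.
Qed.

Definition cover4 (a b c e : 'I_4) := forall k : 'I_4, [\/ k = a, k = b, k = c | k = e].

Lemma scenA (K : numFieldType) (m : nat) (L : 'M[K]_(2,4)) (b c e : 'I_4) :
  minor L 0 b != 0 ->
  (forall u : 'rV[K]_4, (u <= L)%MS -> fermat_form m.+3 u = 0) ->
  (forall u : 'rV[K]_4, fermat_form m.+3 u = eps K 0 * u 0 0 ^+ m.+3 + eps K b * u 0 b ^+ m.+3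
        + eps K c * u 0 c ^+ m.+3 + eps K e * u 0 e ^+ m.+3) ->
  cover4 0 b c e -> b != 0 -> c != 0 -> e != 0 -> b != c -> b != e -> c != e ->
  exists j : 'I_4, j != 0 /\ exists r, r ^+ m.+3 = - eps K j /\ (evec r j <= L)%MS.
Proof.
move=> Hm HF Hform Hc nb nc ne nbc nbe nce.
have e0 : eps K 0 = 1 by [].
case: (class_core Hm HF Hform) => [[b0 [a0 [E1 E2]]]|[a0 [b0 [E1 E2]]]].
- exists c; split=> //.
  apply: (fin0 (w := wv L 0 b 1 0) (lam := alc L 0 b c)) => //; first exact: wv_sub.
    move=> k; rewrite !mxE mulr1 mulr0 addr0.
    case: (Hc k) => ->; rewrite ?eqxx ?alc_a //.
    + by rewrite (negbTE nb) (negbTE nbc) alc_b.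
    + by rewrite (negbTE nc).
    + by rewrite (negbTE ne) eq_sym (negbTE nce) a0.
- exists e; split=> //.
  apply: (fin0 (w := wv L 0 b 1 0) (lam := alc L 0 b e)) => //; first exact: wv_sub.
    move=> k; rewrite !mxE mulr1 mulr0 addr0.
    case: (Hc k) => ->; rewrite ?eqxx ?alc_a //.
    + by rewrite (negbTE nb) (negbTE nbe) alc_b.
    + by rewrite (negbTE nc) (negbTE nce) a0.
    + by rewrite (negbTE ne).
Qed.

Lemma scenC (K : numFieldType) (m : nat) (L : 'M[K]_(2,4)) (a b e : 'I_4) :
  minor L a b != 0 ->
  (forall u : 'rV[K]_4, (u <= L)%MS -> fermat_form m.+3 u = 0) ->
  (forall u : 'rV[K]_4, fermat_form m.+3 u = eps K a * u 0 a ^+ m.+3 + eps K b * u 0 b ^+ m.+3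
        + eps K 0 * u 0 0 ^+ m.+3 + eps K e * u 0 e ^+ m.+3) ->
  cover4 a b 0 e -> a != 0 -> b != 0 -> e != 0 -> a != b -> a != e -> b != e ->
  exists j : 'I_4, j != 0 /\ exists r, r ^+ m.+3 = - eps K j /\ (evec r j <= L)%MS.
Proof.
move=> Hm HF Hform Hc na nb ne nab nae nbe.
have e0 : eps K 0 = 1 by [].
case: (class_core Hm HF Hform) => [[b0 [a0 [E1 E2]]]|[a0 [b0 [E1 E2]]]].
- exists a; split=> //.
  apply: (finj (w := wv L a b 1 0) (lam := alc L a b 0)); first exact: wv_sub.
    move=> k; rewrite !mxE mulr1 mulr0 addr0.
    case: (Hc k) => ->; rewrite ?eqxx ?alc_a //.
    + by rewrite (negbTE na).
    + by rewrite (negbTE nb) eq_sym (negbTE nab) alc_b.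
    + by rewrite (negbTE ne) eq_sym (negbTE nae) a0.
  by rewrite -[eps K 0]/1 mul1r in E1.
- exists b; split=> //.
  apply: (finj (w := wv L a b 0 1) (lam := bec L a b 0)); first exact: wv_sub.
    move=> k; rewrite !mxE mulr1 mulr0 add0r.
    case: (Hc k) => ->; rewrite ?eqxx ?bec_b //.
    + by rewrite (negbTE na) (negbTE nab) bec_a.
    + by rewrite (negbTE nb).
    + by rewrite (negbTE ne) eq_sym (negbTE nbe) b0.
  by rewrite -[eps K 0]/1 mul1r in E2.
Qed.

Ltac cover_tac := let k := fresh "k" in move=> k; case: (ord4P k) => ->;
  first [ by apply: Or41 | by apply: Or42 | by apply: Or43 | by apply: Or44 ].

Lemma line_class (K : numFieldType) (m : nat) (L : 'M[K]_(2,4)) :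
  line_in_fermat m.+3 L ->
  exists j : 'I_4, j != 0 /\ exists r, r ^+ m.+3 = - eps K j /\ (evec r j <= L)%MS.
Proof.
case=> Hl HF; have [a [b [lt_ab Hm]]] := line_minor Hl.
case: (ord4P a) lt_ab Hm => ->; case: (ord4P b) => -> // lt_ab Hm.
- apply: (scenA (c := 2) (e := 3) Hm HF) => //; last by cover_tac.
  by move=> u; rewrite fermat_formE /eps /=; ring.
- apply: (scenA (c := 1) (e := 3) Hm HF) => //; last by cover_tac.
  by move=> u; rewrite fermat_formE /eps /=; ring.
- apply: (scenA (c := 1) (e := 2) Hm HF) => //; last by cover_tac.
  by move=> u; rewrite fermat_formE /eps /=; ring.
- apply: (scenC (e := 3) Hm HF) => //; last by cover_tac.
  by move=> u; rewrite fermat_formE /eps /=; ring.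
- apply: (scenC (e := 2) Hm HF) => //; last by cover_tac.
  by move=> u; rewrite fermat_formE /eps /=; ring.
- apply: (scenC (e := 1) Hm HF) => //; last by cover_tac.
  by move=> u; rewrite fermat_formE /eps /=; ring.
Qed.


Lemma upper (K : numFieldType) (m n : nat) (Ls : 'I_n -> 'M[K]_(2,4)) :
  disjoint_fermat_lines m.+3 Ls -> (n <= 3 * m.+3)%N.
Proof.
case=> Hin Hdis.
have /fin_all_exists [f Hf] : forall i, exists p : 'I_4 * K,
    p.1 != 0 /\ p.2 ^+ m.+3 = - eps K p.1 /\ (evec p.2 p.1 <= Ls i)%MS.
  by move=> i; have [j [nj [r [Hr Hs]]]] := line_class (Hin i); exists (j, r).
have inj : forall i i', f i = f i' -> i = i'.
  move=> i i' E; apply/eqP; apply: contraT => neq.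
  have := Hdis i i' neq; rewrite /disjoint_lines mxrank_eq0 => /eqP cap0.
  have [nj [_ s1]] := Hf i; have [_ [_ s2]] := Hf i'; rewrite -E in s2.
  have : (evec (f i).2 (f i).1 <= (Ls i :&: Ls i')%MS)%MS by rewrite sub_capmx s1 s2.
  rewrite cap0 submx0 => /eqP /rowP /(_ (f i).1); rewrite !mxE eqxx (negbTE nj).
  by move/eqP; rewrite oner_eq0.
have cls : forall j : 'I_4, (#|[pred i | (f i).1 == j]| <= (j != 0%R) * m.+3)%N.
  move=> j; case: (eqVneq j 0) => [->|nj].
    rewrite eq_card0 // => i; rewrite !inE; have [n0 _] := Hf i.
    by apply/negbTE.
  rewrite mul1n cardE.
  set rs := map (fun i => (f i).2) (enum [pred i | (f i).1 == j]).
  have Hu : uniq rs.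
    rewrite map_inj_in_uniq ?enum_uniq // => i i'.
    rewrite !mem_enum !inE => /eqP e1 /eqP e2 e3; apply: inj.
    by case: (f i) (f i') e1 e2 e3 => [x1 y1] [x2 y2] /= -> -> ->.
  have Ha : all (root ('X^(m.+3) - (- eps K j)%:P)) rs.
    apply/allP => x /mapP [i Hi ->]; have [_ [Hr _]] := Hf i.
    rewrite mem_enum inE in Hi.
    by rewrite /root !hornerE Hr (eqP Hi) subrr.
  have := max_poly_roots _ Ha Hu; rewrite size_XnsubC // size_map.
  apply; rewrite -size_poly_eq0 size_XnsubC //.
have -> : n = (\sum_(i < n) 1)%N by rewrite sum1_card card_ord.
rewrite (partition_big (fun i => (f i).1) predT) //=.
rewrite (eq_bigr (fun j => #|[pred i | (f i).1 == j]|)); last first.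
  by move=> j _; rewrite sum1dep_card; apply: eq_card => i; rewrite !inE.
apply: (@leq_trans (\sum_(j < 4) (j != 0%R) * m.+3)%N); first by apply: leq_sum => j _; exact: cls.
rewrite !big_ord_recl big_ord0 /=.
lia.
Qed.


Lemma prim_root_exists (K : numClosedFieldType) n :
  (0 < n)%N -> exists z : K, n.-primitive_root z.
Proof.
move=> n_gt0.
pose p : {poly K} := 'X^n - 1; have [r Dp] := closed_field_poly_normal p.
rewrite (monicP _) ?monicXnsubC // scale1r in Dp.
have rn1: all n.-unity_root r by apply/allP=> z; rewrite -root_prod_XsubC -Dp.
have sz_r: (n < (size r).+1)%N.
  by rewrite -(size_prod_XsubC r id) -Dp size_XnsubC.
have [|z _ Hz] := hasP (has_prim_root n_gt0 rn1 _ sz_r); last by exists z.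
by rewrite -separable_prod_XsubC -Dp separable_Xn_sub_1 // pnatr_eq0 -lt0n.
Qed.

Definition v4 (K : fieldType) (x y z w : K) : 'rV[K]_4 :=
  \row_(j < 4) nth 0 [:: x; y; z; w] j.
Definition ln (K : fieldType) (r0 r1 : 'rV[K]_4) : 'M[K]_(2,4) :=
  \matrix_(i < 2, j < 4) (if val i == 0%N then r0 0 j else r1 0 j).

Lemma ln0 (K : fieldType) (r0 r1 : 'rV[K]_4) j : ln r0 r1 0 j = r0 0 j.
Proof. by rewrite mxE. Qed.
Lemma ln1 (K : fieldType) (r0 r1 : 'rV[K]_4) j : ln r0 r1 1 j = r1 0 j.
Proof. by rewrite mxE. Qed.

Lemma rank2 (K : fieldType) (L : 'M[K]_(2,4)) (c0 c1 : 'I_4) :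
  L 0 c0 = 1 -> L 1 c0 = 0 -> L 0 c1 = 0 -> L 1 c1 = 1 -> is_line L.
Proof.
move=> h00 h10 h01 h11; apply/row_freeP.
exists (\matrix_(j < 4, i < 2) (if val i == 0%N then (j == c0)%:R else (j == c1)%:R)).
apply/matrixP => i i'; rewrite !mxE.
have Hs : forall c : 'I_4, \sum_(j < 4) L i j * (j == c)%:R = L i c.
  move=> c; rewrite (bigD1 c) //= eqxx mulr1 big1 ?addr0 // => j /negbTE ->.
  by rewrite mulr0.
case: (ord2P i') => -> /=; under eq_bigr do rewrite mxE /=; rewrite Hs;
  by case: (ord2P i) => ->.
Qed.

Definition T0 (K : fieldType) (z e : K) := ln (v4 z 1 0 0) (v4 0 0 1 e).
Definition T1 (K : fieldType) (z e : K) := ln (v4 z 0 1 0) (v4 0 1 0 e).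
Definition T2 (K : fieldType) (z e : K) := ln (v4 z 0 0 1) (v4 0 e 1 0).

Lemma v4_eq (K : fieldType) (x y z w x' y' z' w' : K) :
  v4 x y z w = v4 x' y' z' w' -> [/\ x = x', y = y', z = z' & w = w'].
Proof.
move=> E; split.
- by have := congr1 (fun v : 'rV[K]_4 => v 0 0) E; rewrite !mxE.
- by have := congr1 (fun v : 'rV[K]_4 => v 0 1) E; rewrite !mxE.
- by have := congr1 (fun v : 'rV[K]_4 => v 0 2) E; rewrite !mxE.
- by have := congr1 (fun v : 'rV[K]_4 => v 0 3) E; rewrite !mxE.
Qed.

Lemma v4_0 (K : fieldType) : v4 0 0 0 0 = 0 :> 'rV[K]_4.
Proof. by apply/rowP => j; rewrite !mxE; case: (ord4P j) => ->. Qed.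

Lemma mem_ln (K : fieldType) (r0 r1 u : 'rV[K]_4) :
  (u <= ln r0 r1)%MS -> exists s t, forall j, u 0 j = s * r0 0 j + t * r1 0 j.
Proof.
by move/sub2P => [s [t H]]; exists s; exists t => j; rewrite H ln0 ln1.
Qed.

Lemma memT0 (K : fieldType) (z e : K) u : (u <= T0 z e)%MS ->
  exists s t, u = v4 (s * z) s t (t * e).
Proof.
move/mem_ln => [s [t H]]; exists s; exists t; apply/rowP => j; rewrite H !mxE.
by case: (ord4P j) => -> /=; ring.
Qed.
Lemma memT1 (K : fieldType) (z e : K) u : (u <= T1 z e)%MS ->
  exists s t, u = v4 (s * z) t s (t * e).
Proof.
move/mem_ln => [s [t H]]; exists s; exists t; apply/rowP => j; rewrite H !mxE.
by case: (ord4P j) => -> /=; ring.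
Qed.
Lemma memT2 (K : fieldType) (z e : K) u : (u <= T2 z e)%MS ->
  exists s t, u = v4 (s * z) (t * e) t s.
Proof.
move/mem_ln => [s [t H]]; exists s; exists t; apply/rowP => j; rewrite H !mxE.
by case: (ord4P j) => -> /=; ring.
Qed.

Lemma ln_comb (K : fieldType) (r0 r1 : 'rV[K]_4) s t :
  (\row_j (s * r0 0 j + t * r1 0 j)%R <= ln r0 r1)%MS.
Proof.
have -> : \row_j (s * r0 0 j + t * r1 0 j) = comb (ln r0 r1) s t.
  by apply/rowP => j; rewrite !mxE.
exact: comb_sub.
Qed.

Lemma T0_fermat (K : fieldType) d (z e : K) :
  z ^+ d = 1 -> e ^+ d = 1 -> line_in_fermat d (T0 z e).
Proof.
move=> hz he; split.
  by apply: (rank2 (c0 := 1) (c1 := 2)); rewrite !mxE.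
move=> u /memT0 [s [t ->]]; rewrite fermat_formE !mxE /= !exprMn hz he; ring.
Qed.
Lemma T1_fermat (K : fieldType) d (z e : K) :
  z ^+ d = 1 -> e ^+ d = 1 -> line_in_fermat d (T1 z e).
Proof.
move=> hz he; split.
  by apply: (rank2 (c0 := 2) (c1 := 1)); rewrite !mxE.
move=> u /memT1 [s [t ->]]; rewrite fermat_formE !mxE /= !exprMn hz he; ring.
Qed.
Lemma T2_fermat (K : fieldType) d (z e : K) :
  z ^+ d = -1 -> e ^+ d = -1 -> line_in_fermat d (T2 z e).
Proof.
move=> hz he; split.
  by apply: (rank2 (c0 := 3) (c1 := 2)); rewrite !mxE.
move=> u /memT2 [s [t ->]]; rewrite fermat_formE !mxE /= !exprMn hz he; ring.
Qed.

Lemma disj_of (K : fieldType) (L1 L2 : 'M[K]_(2,4)) :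
  (forall u : 'rV[K]_4, (u <= L1)%MS -> (u <= L2)%MS -> u = 0) -> disjoint_lines L1 L2.
Proof.
move=> H; rewrite /disjoint_lines mxrank_eq0 -submx0; apply/row_subP => i.
rewrite submx0; apply/eqP; apply: H.
  exact: submx_trans (row_sub i _) (capmxSl _ _).
exact: submx_trans (row_sub i _) (capmxSr _ _).
Qed.

Lemma disj_sym (K : fieldType) (L1 L2 : 'M[K]_(2,4)) :
  disjoint_lines L1 L2 -> disjoint_lines L2 L1.
Proof. by rewrite /disjoint_lines capmxC. Qed.

Lemma T0T0 (K : fieldType) (z e z' e' : K) :
  z != z' -> e != e' -> disjoint_lines (T0 z e) (T0 z' e').
Proof.
move=> hz he; apply: disj_of => u /memT0 [s [t ->]] /memT0 [s' [t' /v4_eq [E1 E2 E3 E4]]].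
subst s' t'.
have s0 : s = 0.
  by apply/eqP; move/eqP: E1; rewrite -subr_eq0 -mulrBr mulf_eq0 subr_eq0 (negbTE hz) orbF.
have t0 : t = 0.
  by apply/eqP; move/eqP: E4; rewrite -subr_eq0 -mulrBr mulf_eq0 subr_eq0 (negbTE he) orbF.
by rewrite s0 t0 !mul0r v4_0.
Qed.

Lemma mul_eq0l (K : fieldType) (x y : K) : y != 0 -> x * y = 0 -> x = 0.
Proof. by move=> hy /eqP; rewrite mulf_eq0 (negbTE hy) orbF => /eqP. Qed.

Lemma T1T1 (K : fieldType) (z e z' e' : K) :
  z != z' -> e != e' -> disjoint_lines (T1 z e) (T1 z' e').
Proof.
move=> hz he; apply: disj_of => u /memT1 [s [t ->]] /memT1 [s' [t' /v4_eq [E1 E2 E3 E4]]].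
subst s' t'.
have s0 : s = 0 by apply: (mul_eq0l (y := z - z')); rewrite ?subr_eq0 // mulrBr E1 subrr.
have t0 : t = 0 by apply: (mul_eq0l (y := e - e')); rewrite ?subr_eq0 // mulrBr E4 subrr.
by rewrite s0 t0 !mul0r v4_0.
Qed.

Lemma T2T2 (K : fieldType) (z e z' e' : K) :
  z != z' -> e != e' -> disjoint_lines (T2 z e) (T2 z' e').
Proof.
move=> hz he; apply: disj_of => u /memT2 [s [t ->]] /memT2 [s' [t' /v4_eq [E1 E2 E3 E4]]].
subst s' t'.
have s0 : s = 0 by apply: (mul_eq0l (y := z - z')); rewrite ?subr_eq0 // mulrBr E1 subrr.
have t0 : t = 0 by apply: (mul_eq0l (y := e - e')); rewrite ?subr_eq0 // mulrBr E2 subrr.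
by rewrite s0 t0 !mul0r v4_0.
Qed.

Lemma T0T1 (K : fieldType) (z1 e1 z2 e2 : K) :
  z2 != 0 -> z1 * e1 != z2 * e2 -> disjoint_lines (T0 z1 e1) (T1 z2 e2).
Proof.
move=> hz h; apply: disj_of => u /memT0 [s [t ->]] /memT1 [s' [t' /v4_eq [E1 E2 E3 E4]]].
subst s' t'.
have s0 : s = 0.
  apply: (mul_eq0l (y := z1 * e1 - z2 * e2)); rewrite ?subr_eq0 //.
  transitivity ((s * z1) * e1 - (s * e2) * z2); first by ring.
  by rewrite E1 -E4; ring.
have t0 : t = 0 by apply: (mul_eq0l hz); rewrite -E1 s0 mul0r.
by rewrite s0 t0 !mul0r v4_0.
Qed.

Lemma T0T2 (K : fieldType) (z1 e1 z3 e3 : K) :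
  e3 * z1 != e1 * z3 -> disjoint_lines (T0 z1 e1) (T2 z3 e3).
Proof.
move=> h; apply: disj_of => u /memT0 [s [t ->]] /memT2 [s' [t' /v4_eq [E1 E2 E3 E4]]].
subst t' s'; rewrite E2 in E1 *.
have t0 : t = 0.
  apply: (mul_eq0l (y := e3 * z1 - e1 * z3)); rewrite ?subr_eq0 //.
  transitivity (t * e3 * z1 - t * e1 * z3); first by ring.
  by rewrite E1; ring.
by rewrite t0 !mul0r v4_0.
Qed.

Lemma T1T2 (K : fieldType) (z2 e2 z3 e3 : K) :
  z2 != e2 * e3 * z3 -> disjoint_lines (T1 z2 e2) (T2 z3 e3).
Proof.
move=> h; apply: disj_of => u /memT1 [s [t ->]] /memT2 [s' [t' /v4_eq [E1 E2 E3 E4]]].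
subst t' s'; rewrite E2 in E1 *.
have s0 : s = 0.
  apply: (mul_eq0l (y := z2 - e2 * e3 * z3)); rewrite ?subr_eq0 //.
  transitivity (s * z2 - s * e3 * e2 * z3); first by ring.
  by rewrite E1; ring.
by rewrite s0 !mul0r v4_0.
Qed.


Definition mk (K : fieldType) (th : K) (P Q : nat -> nat -> nat) (t a : nat) : 'M[K]_(2,4) :=
  if t == 0%N then T0 (th ^+ P 0%N a) (th ^+ Q 0%N a)
  else if t == 1%N then T1 (th ^+ P 1%N a) (th ^+ Q 1%N a)
  else T2 (- th ^+ P 2%N a) (- th ^+ Q 2%N a).

Definition exp_conds (d : nat) (P Q : nat -> nat -> nat) :=
  [/\ (forall t a a', (t < 3)%N -> (a < d)%N -> (a' < d)%N -> a != a' ->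
         P t a %% d != P t a' %% d /\ Q t a %% d != Q t a' %% d),
      (forall a c, (a < d)%N -> (c < d)%N -> (P 0 a + Q 0 a) %% d != (P 1 c + Q 1 c) %% d),
      (forall a f, (a < d)%N -> (f < d)%N -> (Q 0 a + P 2 f) %% d != (Q 2 f + P 0 a) %% d) &
      (forall c f, (c < d)%N -> (f < d)%N -> P 1 c %% d != (Q 1 c + P 2 f + Q 2 f) %% d)]%N.

Lemma mk_fermat (K : fieldType) d (th : K) P Q t a :
  odd d -> d.-primitive_root th -> (t < 3)%N -> line_in_fermat d (mk th P Q t a).
Proof.
move=> hodd pr ht.
have r1 : forall k, (th ^+ k) ^+ d = 1 by move=> k; rewrite exprAC (prim_expr_order pr) expr1n.
have r2 : forall k, (- th ^+ k) ^+ d = -1.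
  by move=> k; rewrite exprNn r1 mulr1 -signr_odd hodd expr1.
rewrite /mk; case: ifP => _; first exact: T0_fermat.
case: ifP => _; first exact: T1_fermat.
exact: T2_fermat.
Qed.

Lemma mk_disj (K : fieldType) d (th : K) P Q t a t' a' :
  d.-primitive_root th -> exp_conds d P Q ->
  (t < 3)%N -> (a < d)%N -> (t' < 3)%N -> (a' < d)%N -> (t != t') || (a != a') ->
  disjoint_lines (mk th P Q t a) (mk th P Q t' a').
Proof.
move=> pr [Hinj H01 H02 H12] ht ha ht' ha' neq.
have d0 : (0 < d)%N := prim_order_gt0 pr.
have th0 : forall k, th ^+ k != 0.
  move=> k; apply: expf_neq0; apply/eqP => t0.
  by move: (prim_expr_order pr); rewrite t0 expr0n eqn0Ngt d0 /= => /eqP; rewrite eq_sym oner_eq0.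
have ee : forall x y, (th ^+ x == th ^+ y) = (x %% d == y %% d)%N by move=> x y; rewrite (eq_prim_root_expr pr).
have same : forall t0, (t0 < 3)%N -> a != a' -> th ^+ P t0 a != th ^+ P t0 a' /\ th ^+ Q t0 a != th ^+ Q t0 a'.
  move=> t0 ht0 na; rewrite !ee.
  by case: (Hinj t0 a a' ht0 ha ha' na) => -> ->.
have c01 : forall a a' : nat, (a < d)%N -> (a' < d)%N ->
   disjoint_lines (mk th P Q 0 a) (mk th P Q 1 a').
  move=> x y hx hy; rewrite /mk /=; apply: T0T1 => //.
  by rewrite -!exprD ee; apply: H01.
have c02 : forall a a' : nat, (a < d)%N -> (a' < d)%N ->
   disjoint_lines (mk th P Q 0 a) (mk th P Q 2 a').
  move=> x y hx hy; rewrite /mk /=; apply: T0T2.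
  by rewrite mulNr mulrN eqr_opp -!exprD ee eq_sym; apply: H02.
have c12 : forall a a' : nat, (a < d)%N -> (a' < d)%N ->
   disjoint_lines (mk th P Q 1 a) (mk th P Q 2 a').
  move=> x y hx hy; rewrite /mk /=; apply: T1T2.
  by rewrite !mulrN !mulNr opprK -!exprD ee addnAC; apply: H12.
case: (ltngtP t t') => [lt|gt|eq].
- have : (t = 0 /\ t' = 1 \/ t = 0 /\ t' = 2 \/ t = 1 /\ t' = 2)%N by lia.
  by case=> [[-> ->]|[[-> ->]|[-> ->]]]; [exact: c01 | exact: c02 | exact: c12].
- apply: disj_sym.
  have : (t' = 0 /\ t = 1 \/ t' = 0 /\ t = 2 \/ t' = 1 /\ t = 2)%N by lia.
  by case=> [[-> ->]|[[-> ->]|[-> ->]]]; [exact: c01 | exact: c02 | exact: c12].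
- subst t'; move: neq; rewrite eqxx /= => na.
  have : (t = 0 \/ t = 1 \/ t = 2)%N by lia.
  case=> [->|[->|->]]; rewrite /mk /=.
  + by case: (same 0%N isT na) => h1 h2; apply: T0T0.
  + by case: (same 1%N isT na) => h1 h2; apply: T1T1.
  + case: (same 2%N isT na) => h1 h2; apply: T2T2; by rewrite eqr_opp.
Qed.

Lemma exist_lines (K : fieldType) d (th : K) P Q :
  odd d -> d.-primitive_root th -> exp_conds d P Q ->
  exists Ls : 'I_(3 * d) -> 'M[K]_(2,4), disjoint_fermat_lines d Ls.
Proof.
move=> hodd pr hc.
have d0 := prim_order_gt0 pr.
exists (fun i : 'I_(3*d) => mk th P Q (i %/ d) (i %% d)).
have hq : forall i : 'I_(3*d), (i %/ d < 3)%N by move=> i; rewrite ltn_divLR // mulnC.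
have hr : forall i : 'I_(3*d), (i %% d < d)%N by move=> i; rewrite ltn_mod.
split.
- by move=> i; apply: mk_fermat.
- move=> i j nij; apply: (mk_disj pr hc) => //.
  apply: contraR nij; rewrite negb_or !negbK => /andP [/eqP e1 /eqP e2]; apply/eqP/val_inj => /=.
  by rewrite (divn_eq i d) (divn_eq j d) e1 e2.
Qed.

Local Close Scope ring_scope.


Lemma modn_neq (X Y d B : nat) : 0 < d -> X < Y + B * d -> Y < X + B * d ->
  (forall q, q < B -> X <> Y + q * d /\ Y <> X + q * d) -> X %% d != Y %% d.
Proof.
move=> d0 h1 h2 H; apply/negP => /eqP E.
wlog le : X Y h1 h2 E H / Y <= X.
  move=> W; case: (leqP Y X) => [le|lt]; first by apply: (W X Y).
  apply: (W Y X) => //; last by rewrite ltnW.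
  by move=> q /H [] ? ?; split.
have /dvdnP [q Eq] : d %| X - Y by rewrite -eqn_mod_dvd // E.
have hq : q < B.
  by rewrite -(ltn_pmul2r d0) -Eq ltn_subLR // addnC.
have [H1 _] := H q hq; apply: H1; by rewrite -Eq addnC subnK.
Qed.

Ltac qcases := let q := fresh "q" in let hq := fresh "hq" in
  move=> q hq; do 10? (case: q hq => [|q] hq; first by split; lia); exfalso; lia.

Definition rho3 (d a : nat) := if a == d.-1 then a else if odd a then a.-1 else a.+1.

Lemma rho3_spec d a : a < d ->
  [\/ a = d.-1 /\ rho3 d a = a,
      a %% 2 = 1 /\ a < d.-1 /\ rho3 d a = a.-1 |
      a %% 2 = 0 /\ a < d.-1 /\ rho3 d a = a.+1].
Proof.
move=> ad; rewrite /rho3; case: eqP => [->|ne]; first by constructor 1.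
have lt : a < d.-1 by lia.
case: (boolP (odd a)) => oa.
  by constructor 2; rewrite modn2 oa.
by constructor 3; rewrite modn2 (negbTE oa).
Qed.

Lemma rho3_facts n a : a < 4 * n + 3 ->
  [/\ rho3 (4 * n + 3) a < 4 * n + 3, a <= rho3 (4 * n + 3) a + 1,
      rho3 (4 * n + 3) a <= a + 1 &
      exists i, i < 2 * n + 1 /\
        (a + rho3 (4 * n + 3) a = 4 * i + 1 \/ a + rho3 (4 * n + 3) a = 4 * i + 1 + (4 * n + 3))].
Proof.
move=> ha; case: (rho3_spec ha) => [[-> ->]|[h1 [h2 ->]]|[h1 [h2 ->]]].
- split; try lia; exists n; split; lia.
- split; try lia; exists (a %/ 2); split; lia.
- split; try lia; exists (a %/ 2); split; lia.
Qed.

Lemma rho3_inj n a a' : a < 4 * n + 3 -> a' < 4 * n + 3 ->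
  rho3 (4 * n + 3) a = rho3 (4 * n + 3) a' -> a = a'.
Proof.
move=> ha ha'; case: (rho3_spec ha) => [[h1 ->]|[h1 [h2 ->]]|[h1 [h2 ->]]];
case: (rho3_spec ha') => [[h1' ->]|[h1' [h2' ->]]|[h1' [h2' ->]]]; lia.
Qed.

Definition P3 n t a := if t == 0 then 4 * a else if t == 1 then a + 1 else 4 * a + 2 * n + 5.
Definition Q3 n t a :=
  let s := (4 * n + 3).+1 - rho3 (4 * n + 3) a in
  if t == 0 then 4 * s else if t == 1 then s else 4 * s + 2 * n - 3.

Lemma conds3 n : 2 <= n -> exp_conds (4 * n + 3) (P3 n) (Q3 n).
Proof.
move=> n2; have d0 : 0 < 4 * n + 3 by lia.
split.
- move=> t a a' ht ha ha' naa.
  have [r1 l1 u1 _] := rho3_facts ha; have [r1' l1' u1' _] := rho3_facts ha'.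
  have hne : rho3 (4 * n + 3) a <> rho3 (4 * n + 3) a'.
    by move/(rho3_inj ha ha')=> E; rewrite E eqxx in naa.
  have : t = 0 \/ t = 1 \/ t = 2 by lia.
  case=> [->|[->|->]]; rewrite /P3 /Q3 /=; split;
    apply: (modn_neq (B := 10)) => //; try lia; qcases.
- move=> a c ha hc; have [r1 l1 u1 _] := rho3_facts ha; have [r2 l2 u2 _] := rho3_facts hc.
  rewrite /P3 /Q3 /=; apply: (modn_neq (B := 10)) => //; try lia; qcases.
- move=> a f ha hf; have [r1 l1 u1 [i1 [hi1 E1]]] := rho3_facts ha.
  have [r2 l2 u2 [i2 [hi2 E2]]] := rho3_facts hf.
  rewrite /P3 /Q3 /=; apply: (modn_neq (B := 10)) => //; try lia; qcases.
- move=> c f hc hf; have [r1 l1 u1 [i1 [hi1 E1]]] := rho3_facts hc.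
  have [r2 l2 u2 [i2 [hi2 E2]]] := rho3_facts hf.
  rewrite /P3 /Q3 /=; apply: (modn_neq (B := 10)) => //; try lia; qcases.
Qed.

Definition rho1 (d a : nat) :=
  if a == d - 3 then d.-1 else if a == d - 2 then a else if a == d.-1 then d - 3
  else if odd a then a.-1 else a.+1.

Lemma rho1_spec d a : 3 < d -> a < d ->
  (a = d - 3 /\ rho1 d a = d.-1) \/ (a = d - 2 /\ rho1 d a = a) \/ (a = d.-1 /\ rho1 d a = d - 3) \/
      (a %% 2 = 1 /\ a < d - 3 /\ rho1 d a = a.-1) \/
      (a %% 2 = 0 /\ a < d - 3 /\ rho1 d a = a.+1).
Proof.
move=> d3 ad; rewrite /rho1.
case: eqP => [->|n1]; first by left.
case: eqP => [->|n2]; first by right; left.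
case: eqP => [->|n3]; first by right; right; left.
have lt : a < d - 3 by lia.
case: (boolP (odd a)) => oa.
  by right; right; right; left; rewrite modn2 oa.
by right; right; right; right; rewrite modn2 (negbTE oa).
Qed.

Lemma rho1_facts n a : 1 <= n -> a < 4 * n + 1 ->
  [/\ rho1 (4 * n + 1) a < 4 * n + 1, a <= rho1 (4 * n + 1) a + 2,
      rho1 (4 * n + 1) a <= a + 2 &
      exists i, i < 2 * n - 1 /\
        (a + rho1 (4 * n + 1) a = 4 * i + 1 \/ a + rho1 (4 * n + 1) a = 4 * i + 1 + (4 * n + 1))].
Proof.
move=> n1 ha; have d3 : 3 < 4 * n + 1 by lia.
case: (rho1_spec d3 ha) => [[-> ->]|[[-> ->]|[[-> ->]|[[h1 [h2 ->]]|[h1 [h2 ->]]]]]].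
- split; try lia; exists (n - 1); split; lia.
- split; try lia; exists (n - 1); split; lia.
- split; try lia; exists (n - 1); split; lia.
- split; try lia; exists (a %/ 2); split; lia.
- split; try lia; exists (a %/ 2); split; lia.
Qed.

Lemma rho1_inj n a a' : 1 <= n -> a < 4 * n + 1 -> a' < 4 * n + 1 ->
  rho1 (4 * n + 1) a = rho1 (4 * n + 1) a' -> a = a'.
Proof.
move=> n1 ha ha'; have d3 : 3 < 4 * n + 1 by lia.
case: (rho1_spec d3 ha) => [[h1 ->]|[[h1 ->]|[[h1 ->]|[[h1 [h2 ->]]|[h1 [h2 ->]]]]]];
case: (rho1_spec d3 ha') => [[h1' ->]|[[h1' ->]|[[h1' ->]|[[h1' [h2' ->]]|[h1' [h2' ->]]]]]]; lia.
Qed.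

Definition P1 (n t a : nat) := if t == 0 then 4 * a else if t == 1 then a else 4 * a + 7.
Definition Q1 n t a :=
  let s := (4 * n + 1).+1 - rho1 (4 * n + 1) a in
  if t == 0 then 4 * s else if t == 1 then s + (4 * n + 1) - 8 else 4 * s + (4 * n + 1) - 1.

Lemma conds1 n : 6 <= n -> exp_conds (4 * n + 1) (P1 n) (Q1 n).
Proof.
move=> n6; have n1 : 1 <= n by lia.
have d0 : 0 < 4 * n + 1 by lia.
split.
- move=> t a a' ht ha ha' naa.
  have [r1 l1 u1 _] := rho1_facts n1 ha; have [r1' l1' u1' _] := rho1_facts n1 ha'.
  have hne : rho1 (4 * n + 1) a <> rho1 (4 * n + 1) a'.
    by move/(rho1_inj n1 ha ha')=> E; rewrite E eqxx in naa.
  have : t = 0 \/ t = 1 \/ t = 2 by lia.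
  case=> [->|[->|->]]; rewrite /P1 /Q1 /=; split;
    apply: (modn_neq (B := 10)) => //; try lia; qcases.
- move=> a c ha hc; have [r1 l1 u1 _] := rho1_facts n1 ha; have [r2 l2 u2 _] := rho1_facts n1 hc.
  rewrite /P1 /Q1 /=; apply: (modn_neq (B := 10)) => //; try lia; qcases.
- move=> a f ha hf; have [r1 l1 u1 [i1 [hi1 E1]]] := rho1_facts n1 ha.
  have [r2 l2 u2 [i2 [hi2 E2]]] := rho1_facts n1 hf.
  rewrite /P1 /Q1 /=; apply: (modn_neq (B := 10)) => //; try lia; qcases.
- move=> c f hc hf; have [r1 l1 u1 [i1 [hi1 E1]]] := rho1_facts n1 hc.
  have [r2 l2 u2 [i2 [hi2 E2]]] := rho1_facts n1 hf.
  rewrite /P1 /Q1 /=; apply: (modn_neq (B := 10)) => //; try lia; qcases.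
Qed.


Definition chk d (P Q : nat -> nat -> nat) : bool :=
  [&& all (fun t => all (fun a => all (fun a' => (a == a') ||
          ((P t a %% d != P t a' %% d) && (Q t a %% d != Q t a' %% d))) (iota 0 d)) (iota 0 d)) (iota 0 3),
      all (fun a => all (fun c => (P 0 a + Q 0 a) %% d != (P 1 c + Q 1 c) %% d) (iota 0 d)) (iota 0 d),
      all (fun a => all (fun f => (Q 0 a + P 2 f) %% d != (Q 2 f + P 0 a) %% d) (iota 0 d)) (iota 0 d) &
      all (fun c => all (fun f => P 1 c %% d != (Q 1 c + P 2 f + Q 2 f) %% d) (iota 0 d)) (iota 0 d)].

Lemma allI (d : nat) (p : nat -> bool) : all p (iota 0 d) -> forall a, a < d -> p a.
Proof. by move/allP => H a ha; apply: H; rewrite mem_iota. Qed.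

Lemma chkP d P Q : chk d P Q -> exp_conds d P Q.
Proof.
case/and4P => h1 h2 h3 h4; split.
- move=> t a a' ht ha ha' na.
  have := allI (allI (allI h1 ht) ha) ha'; rewrite (negbTE na) /=.
  by case/andP.
- by move=> a c ha hc; apply: (allI (allI h2 ha) hc).
- by move=> a c ha hc; apply: (allI (allI h3 ha) hc).
- by move=> a c ha hc; apply: (allI (allI h4 ha) hc).
Qed.

Definition tbl7 : seq (seq nat) :=
  [:: [:: 0; 1; 5; 6; 4; 3; 2];
     [:: 5; 2; 3; 1; 6; 0; 4];
     [:: 4; 0; 6; 5; 3; 2; 1] ].

Definition tbl9 : seq (seq nat) :=
  [:: [:: 1; 2; 7; 8; 5; 6; 3; 4; 0];
     [:: 6; 4; 3; 2; 1; 0; 7; 8; 5];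
     [:: 4; 3; 2; 6; 7; 8; 5; 0; 1] ].

Definition tbl13 : seq (seq nat) :=
  [:: [:: 4; 0; 12; 1; 2; 9; 11; 5; 6; 8; 7; 3; 10];
     [:: 0; 12; 11; 10; 9; 3; 4; 1; 2; 7; 8; 5; 6];
     [:: 9; 4; 5; 11; 12; 6; 8; 7; 2; 3; 10; 1; 0] ].

Definition tbl17 : seq (seq nat) :=
  [:: [:: 11; 16; 14; 8; 12; 6; 4; 9; 3; 7; 1; 5; 10; 15; 2; 13; 0];
     [:: 8; 14; 13; 5; 11; 10; 2; 1; 7; 16; 15; 4; 3; 12; 6; 0; 9];
     [:: 13; 15; 1; 16; 10; 14; 5; 7; 12; 8; 6; 11; 4; 9; 0; 2; 3] ].

Definition tbl21 : seq (seq nat) :=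
  [:: [:: 7; 8; 9; 10; 11; 4; 3; 6; 5; 0; 20; 2; 1; 17; 16; 19; 18; 13; 12; 15; 14];
     [:: 2; 3; 0; 1; 19; 20; 17; 18; 14; 15; 16; 12; 13; 10; 11; 8; 9; 6; 7; 4; 5];
     [:: 1; 17; 10; 14; 18; 13; 12; 5; 8; 20; 3; 19; 4; 16; 7; 15; 0; 9; 11; 6; 2] ].

Definition tP (t a : nat) := a.
Definition tQ (tb : seq (seq nat)) (t a : nat) := nth 0 (nth [::] tb t) a.

Lemma conds7 : exp_conds 7 tP (tQ tbl7).
Proof. by apply: chkP; vm_compute. Qed.
Lemma conds9 : exp_conds 9 tP (tQ tbl9).
Proof. by apply: chkP; vm_compute. Qed.
Lemma conds13 : exp_conds 13 tP (tQ tbl13).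
Proof. by apply: chkP; vm_compute. Qed.
Lemma conds17 : exp_conds 17 tP (tQ tbl17).
Proof. by apply: chkP; vm_compute. Qed.
Lemma conds21 : exp_conds 21 tP (tQ tbl21).
Proof. by apply: chkP; vm_compute. Qed.

Lemma conds_exist d : odd d -> 7 <= d -> exists P Q, exp_conds d P Q.
Proof.
move=> hodd hd.
have [n [r [E hr]]] : exists n r, d = 4 * n + r /\ r < 4.
  by exists (d %/ 4); exists (d %% 4); split; [rewrite {1}(divn_eq d 4); lia | rewrite ltn_mod].
subst d.
have h2 : (4 * n + r) %% 2 = 1 by rewrite modn2 hodd.
have : r = 1 \/ r = 3 by lia.
case=> Er; subst r.
- case: (leqP 6 n) => hn; first by exists (P1 n); exists (Q1 n); apply: conds1.
  have : n = 2 \/ n = 3 \/ n = 4 \/ n = 5 by lia.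
  case=> [->|[->|[->|->]]].
  + by exists tP; exists (tQ tbl9); exact: conds9.
  + by exists tP; exists (tQ tbl13); exact: conds13.
  + by exists tP; exists (tQ tbl17); exact: conds17.
  + by exists tP; exists (tQ tbl21); exact: conds21.
- case: (leqP 2 n) => hn; first by exists (P3 n); exists (Q3 n); apply: conds3.
  have -> : n = 1 by lia.
  by exists tP; exists (tQ tbl7); exact: conds7.
Qed.

Local Open Scope ring_scope.


Theorem corollary4p6 (R : realType) (d : nat) (hodd : odd d) (hd : (7 <= d)%N) :
  (exists Ls : 'I_(3 * d) -> 'M[R[i]]_(2, 4), disjoint_fermat_lines d Ls) /\
  (forall (n : nat) (Ls : 'I_n -> 'M[R[i]]_(2, 4)),
      disjoint_fermat_lines d Ls -> (n <= 3 * d)%N).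
Proof.
split.
- have d0 : (0 < d)%N by apply: leq_trans hd.
  have [th pr] := prim_root_exists (R[i]) d0.
  have [P [Q hc]] := conds_exist hodd hd.
  exact: exist_lines hodd pr hc.
- move=> n Ls; case: d hodd hd => [|[|[|m]]] // _ _.
  exact: upper.
Qed.
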